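(* With the notation of the context, let $\alpha^*=\inf_{x\in\Delta}G(x)$. Then there exists $x^*\in\Delta$ with $G(x^* )=\alpha^*$.
   Context: Fix an integer $n\ge2$ and free generators $\xi_1,\dots,\xi_n$ of a free group; throughout $i,j,k\in\{1,\dots,n\}$ and $t,s,p\in\{-1,+1\}$. Let $\Psi$ be the set of reduced words $\xi_i^{2t}$; $\xi_i^t\xi_j^{2s}$ ($i\ne j$); $\xi_i^t\xi_j^s\xi_k^p$ ($i\ne j$, $j\ne k$). Types: type 1 $=\xi_i^{2t}$; type 2 $=\xi_i^t\xi_j^{2s}$; type 3 $=\xi_i^t\xi_j^s\xi_i^t$; type 4 $=\xi_i^t\xi_j^s\xi_i^{-t}$; type 5 $=\xi_i^t\xi_j^s\xi_k^p$ with $i,j,k$ pairwise distinct. For a letter $\xi_a^x$ let $S(\xi_a^x)\subset\Psi$ be the set of words in $\Psi$ beginning with $\xi_a^x$, namely $\{\xi_a^{2x}\}\cup\{\xi_a^x\xi_j^{2s}\}\cup\{\xi_a^x\xi_j^s\xi_k^p\}$; for $a\ne b$ let $S(\xi_a^x\xi_b^y)=\{\xi_a^x\xi_b^{2y}\}\cup\{\xi_a^x\xi_b^y\xi_k^p: k\ne b\}$. A relation $r$ is a pair $(\psi_r,\Psi_r)$ with $\psi_r\in\Psi$, $\Psi_r\subseteq\Psi$; the relations considered are (indices $i_0\ne j_0$, and in type 5 $i_0,j_0,k_0$ pairwise distinct, all signs arbitrary): 1a: $\psi_r=\xi_{i_0}^{2t_0}$, $\Psi_r=\Psi\setminus S(\xi_{i_0}^{t_0})$;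 1b: $\psi_r=\xi_{i_0}^{2t_0}$, $\Psi_r=\Psi\setminus\{\xi_{i_0}^{t_0}\xi_{j_0}^{s_0}\xi_{i_0}^{t_0}\}$; 2a: $\psi_r=\xi_{i_0}^{t_0}\xi_{j_0}^{2s_0}$, $\Psi_r=\Psi\setminus\{\xi_{j_0}^{2s_0}\}$; 2b: $\psi_r=\xi_{i_0}^{t_0}\xi_{j_0}^{2s_0}$, $\Psi_r=\Psi\setminus S(\xi_{i_0}^{t_0}\xi_{j_0}^{s_0})$; 3a: $\psi_r=\xi_{i_0}^{t_0}\xi_{j_0}^{s_0}\xi_{i_0}^{t_0}$, $\Psi_r=\Psi\setminus S(\xi_{j_0}^{s_0}\xi_{i_0}^{t_0})$; 3b: $\psi_r=\xi_{i_0}^{t_0}\xi_{j_0}^{s_0}\xi_{i_0}^{t_0}$, $\Psi_r=\Psi\setminus\{\xi_{i_0}^{2t_0}\}$; 4a: $\psi_r=\xi_{i_0}^{t_0}\xi_{j_0}^{s_0}\xi_{i_0}^{-t_0}$, $\Psi_r=\Psi\setminus S(\xi_{j_0}^{s_0}\xi_{i_0}^{-t_0})$; 4b: $\psi_r=\xi_{i_0}^{t_0}\xi_{j_0}^{s_0}\xi_{i_0}^{-t_0}$, $\Psi_r=S(\xi_{i_0}^{t_0})$; 5a: $\psi_r=\xi_{i_0}^{t_0}\xi_{j_0}^{s_0}\xi_{k_0}^{p_0}$, $\Psi_r=\Psi\setminus S(\xi_{j_0}^{s_0}\xi_{k_0}^{p_0})$; 5b: $\psi_r=\xi_{i_0}^{t_0}\xi_{j_0}^{s_0}\xi_{k_0}^{p_0}$,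 $\Psi_r=\Psi\setminus S(\xi_{i_0}^{t_0}\xi_{k_0}^{p_0})$. Let $\mathcal{G}$ be the collection of all these relations and $\mathcal{F}\subset\mathcal{G}$ the relations of types 1a, 2b, 3a, 4b, 5a. Let $\Delta=\{x\in\mathbb{R}^\Psi: x(\psi)>0\ \forall\psi,\ \sum_{\psi\in\Psi}x(\psi)=1\}$. For a relation $r$ and $x\in\Delta$, put $x_r=x(\psi_r)$, $X_r=\sum_{\psi\in\Psi_r}x(\psi)$ and $f_r(x)=\frac{1-x_r}{x_r}\cdot\frac{1-X_r}{X_r}$. Define $F(x)=\max_{r\in\mathcal{F}}f_r(x)$ and $G(x)=\max_{r\in\mathcal{G}}f_r(x)$ on $\Delta$. *)

(* Defs.v *)
From HB Require Import structures.
From mathcomp Require Import all_boot all_order all_algebra.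
From mathcomp Require Import boolp classical_sets reals.
Set Implicit Arguments. Unset Strict Implicit. Unset Printing Implicit Defensive.
Import Order.TTheory GRing.Theory Num.Theory.
Local Open Scope ring_scope.

Section Words.
Variable n : nat.

(* A letter xi_i^t : index i, sign t (true = +1, false = -1). *)
Definition letter := ('I_n * bool)%type.
Definition idx (l : letter) : 'I_n := l.1.
Definition linv (l : letter) : letter := (l.1, ~~ l.2).

(* Raw words of length 2 or 3 as letter sequences:
   (a, b, None) = a b ;  (a, b, Some c) = a b c. *)
Definition word := (letter * letter * option letter)%type.

(* Membership in Psi:
   xi_i^{2t}             = (a, a, None)
   xi_i^t xi_j^{2s}      = (a, b, Some b)   with i <> j
   xi_i^t xi_j^s xi_k^p  = (a, b, Some c)   with i <> j, j <> k. *)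
Definition inPsi (w : word) : bool :=
  match w with
  | (a, b, None) => a == b
  | (a, b, Some c) => (idx a != idx b) && ((c == b) || (idx c != idx b))
  end.

Definition Psi := {w : word | inPsi w}.

Definition S1 (l : letter) (w : word) : bool := w.1.1 == l.

(* S(xi_a^x xi_b^y) = {xi_a^x xi_b^{2y}} u {xi_a^x xi_b^y xi_k^p : k <> b} *)
Definition S2 (l1 l2 : letter) (w : word) : bool :=
  match w with
  | (a, b, Some c) => (a == l1) && (b == l2) && ((c == l2) || (idx c != idx l2))
  | _ => false
  end.

(* A relation r = (psi_r, Psi_r). *)
Definition relation := (Psi * {set Psi})%type.

Definition compl (P : word -> bool) : {set Psi} := [set w : Psi | ~~ P (val w)].
Definition minus1 (v : word) : {set Psi} := [set w : Psi | val w != v].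

Definition is1a (r : relation) : bool :=
  [exists i0 : 'I_n, exists t0 : bool,
    let a := (i0, t0) in (val r.1 == (a, a, None)) && (r.2 == compl (S1 a))].
Definition is1b (r : relation) : bool :=
  [exists i0 : 'I_n, exists j0 : 'I_n, exists t0 : bool, exists s0 : bool,
    let a := (i0, t0) in let b := (j0, s0) in
    [&& i0 != j0, val r.1 == (a, a, None) & r.2 == minus1 (a, b, Some a)]].
Definition is2a (r : relation) : bool :=
  [exists i0 : 'I_n, exists j0 : 'I_n, exists t0 : bool, exists s0 : bool,
    let a := (i0, t0) in let b := (j0, s0) in
    [&& i0 != j0, val r.1 == (a, b, Some b) & r.2 == minus1 (b, b, None)]].
Definition is2b (r : relation) : bool :=
  [exists i0 : 'I_n, exists j0 : 'I_n, exists t0 : bool, exists s0 : bool,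
    let a := (i0, t0) in let b := (j0, s0) in
    [&& i0 != j0, val r.1 == (a, b, Some b) & r.2 == compl (S2 a b)]].
Definition is3a (r : relation) : bool :=
  [exists i0 : 'I_n, exists j0 : 'I_n, exists t0 : bool, exists s0 : bool,
    let a := (i0, t0) in let b := (j0, s0) in
    [&& i0 != j0, val r.1 == (a, b, Some a) & r.2 == compl (S2 b a)]].
Definition is3b (r : relation) : bool :=
  [exists i0 : 'I_n, exists j0 : 'I_n, exists t0 : bool, exists s0 : bool,
    let a := (i0, t0) in let b := (j0, s0) in
    [&& i0 != j0, val r.1 == (a, b, Some a) & r.2 == minus1 (a, a, None)]].
Definition is4a (r : relation) : bool :=
  [exists i0 : 'I_n, exists j0 : 'I_n, exists t0 : bool, exists s0 : bool,
    let a := (i0, t0) in let b := (j0, s0) in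
    [&& i0 != j0, val r.1 == (a, b, Some (linv a)) & r.2 == compl (S2 b (linv a))]].
Definition is4b (r : relation) : bool :=
  [exists i0 : 'I_n, exists j0 : 'I_n, exists t0 : bool, exists s0 : bool,
    let a := (i0, t0) in let b := (j0, s0) in
    [&& i0 != j0, val r.1 == (a, b, Some (linv a)) & r.2 == [set w : Psi | S1 a (val w)]%SET]].
Definition is5a (r : relation) : bool :=
  [exists i0 : 'I_n, exists j0 : 'I_n, exists k0 : 'I_n,
   exists t0 : bool, exists s0 : bool, exists p0 : bool,
    let a := (i0, t0) in let b := (j0, s0) in let c := (k0, p0) in
    [&& i0 != j0, j0 != k0, i0 != k0,
        val r.1 == (a, b, Some c) & r.2 == compl (S2 b c)]].
Definition is5b (r : relation) : bool :=
  [exists i0 : 'I_n, exists j0 : 'I_n, exists k0 : 'I_n,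
   exists t0 : bool, exists s0 : bool, exists p0 : bool,
    let a := (i0, t0) in let b := (j0, s0) in let c := (k0, p0) in
    [&& i0 != j0, j0 != k0, i0 != k0,
        val r.1 == (a, b, Some c) & r.2 == compl (S2 a c)]].

Definition inG (r : relation) : bool :=
  [|| is1a r, is1b r, is2a r, is2b r, is3a r, is3b r, is4a r, is4b r, is5a r | is5b r].
Definition inF (r : relation) : bool :=
  [|| is1a r, is2b r, is3a r, is4b r | is5a r].

Variable R : realType.

Local Open Scope classical_set_scope.
Definition Delta : set (Psi -> R) :=
  [set x | (forall w, 0 < x w) /\ \sum_(w : Psi) x w = 1].

Definition xr (r : relation) (x : Psi -> R) : R := x r.1.
Definition Xr (r : relation) (x : Psi -> R) : R := \sum_(w in r.2) x w.
Definition fr (r : relation) (x : Psi -> R) : R :=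
  (1 - xr r x) / xr r x * ((1 - Xr r x) / Xr r x).

(* Maximum over a finite nonempty collection; the default 0 is harmless
   since every f_r is >= 0 on Delta. *)
Definition Ffun (x : Psi -> R) : R := \big[Num.max/0]_(r : relation | inF r) fr r x.
Definition Gfun (x : Psi -> R) : R := \big[Num.max/0]_(r : relation | inG r) fr r x.

End Words.

(* Main.v *)
Require Import Defs.
From HB Require Import structures.
From mathcomp Require Import all_boot all_order all_algebra.
From mathcomp Require Import boolp classical_sets reals.
From mathcomp Require Import ring lra.
Import Order.TTheory GRing.Theory Num.Theory.
Local Open Scope ring_scope.
Local Open Scope classical_set_scope.

Section Comb.
Variables (n : nat) (R : realType).
Hypothesis hn : (2 <= n)%N.

Lemma bigmax_ge (I : eqType) (s : seq I) (P : pred I) (F : I -> R) i :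
  P i -> i \in s -> F i <= \big[Num.max/0]_(j <- s | P j) F j.
Proof.
move=> Pi; elim: s => [//|j s IH]; rewrite inE big_cons.
case/orP => [/eqP <-|/IH h]; first by rewrite Pi le_max lexx.
by case: (P j) => //; rewrite le_max h orbT.
Qed.

Lemma fr_le_G (r : relation n) (x : Psi n -> R) : inG r -> fr r x <= Gfun x.
Proof. move=> h; rewrite /Gfun. apply: (@bigmax_ge _ _ (fun r => inG r) (fun r => fr r x)) => //; by rewrite mem_index_enum. Qed.

Lemma edge (x : Psi n -> R) (M c : R) (r : relation n) :
  Delta x -> inG r -> Gfun x <= M -> 0 <= M -> (exists w0, w0 \in r.2) ->
  forall w, w \notin r.2 -> c <= x w -> 0 < c -> c / (M + c) <= x r.1.
Proof.
move=> [xpos xsum] hG hM M0 [w0 w0in] w wn cw c0.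
have hfr := le_trans (fr_le_G r x hG) hM.
move: hfr; rewrite /fr /xr /Xr.
set p := x r.1; set X := \sum_(i in r.2) x i => hfr.
have p0 : 0 < p by apply: xpos.
have X0 : x w0 <= X.
  by rewrite /X (bigD1 w0) //= lerDl sumr_ge0 // => i _; apply: ltW.
have X0' : 0 < X by apply: lt_le_trans X0; apply: xpos.
have hsum : X + x w <= 1.
  rewrite -xsum (bigID (fun i => i \in r.2)) /= lerD2l (bigD1 w) //= lerDl.
  by rewrite sumr_ge0 // => i _; apply: ltW.
have hp : p <= 1.
  by rewrite -xsum (bigD1 r.1) //= lerDl sumr_ge0 // => i _; apply: ltW.
set u := _ * _ in hfr.
have hu : (1 - p) * (1 - X) = u * (p * X).
  rewrite /u; field; apply/andP; split; by rewrite gt_eqF.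
have h2 : (1 - p) * (1 - X) <= M * (p * X).
  by rewrite hu ler_wpM2r // mulr_ge0 // ltW.
have h3 : c * (1 - p) <= (1 - X) * (1 - p) by rewrite ler_wpM2r //; lra.
have h4 : M * (p * X) <= M * p by rewrite ler_wpM2l // ger_pMr //; lra.
rewrite ler_pdivrMr; last by lra.
nra.
Qed.

Lemma inG1a (r : relation n) : is1a r -> inG r. Proof. by move=> H; rewrite /inG H. Qed.
Lemma inG2a (r : relation n) : is2a r -> inG r.
Proof. move=> H; rewrite /inG; do 2 (apply/orP; right); apply/orP; left; exact: H. Qed.
Lemma inG3b (r : relation n) : is3b r -> inG r.
Proof. move=> H; rewrite /inG; do 5 (apply/orP; right); apply/orP; left; exact: H. Qed.
Lemma inG4b (r : relation n) : is4b r -> inG r.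
Proof. move=> H; rewrite /inG; do 7 (apply/orP; right); apply/orP; left; exact: H. Qed.
Lemma inG5a (r : relation n) : is5a r -> inG r.
Proof. move=> H; rewrite /inG; do 8 (apply/orP; right); apply/orP; left; exact: H. Qed.

Definition o0 : 'I_n := Ordinal (ltnW hn).
Definition o1 : 'I_n := Ordinal hn.
Definition oth (i : 'I_n) : 'I_n := if val i == 0%N then o1 else o0.
Lemma oth_neq i : i != oth i.
Proof.
rewrite /oth; case: ifP => /eqP h; apply/negP => /eqP /(congr1 val) /= e.
  by move: h; rewrite -[val i]/(nat_of_ord i) e.
by apply: h; rewrite -[val i]/(nat_of_ord i) e.
Qed.

Definition wa (a : letter n) : Psi n := exist _ (a, a, None) (eqxx a).

Lemma linv_neq (a : letter n) : linv a != a.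
Proof. by case: a => i [] //=; rewrite /linv /= xpair_eqE eqxx. Qed.

Definition hf (M c : R) := c / (M + c).

Definition NN : R := (#|{: Psi n}|)%:R.
Lemma card_pos : (0 < #|{: Psi n}|)%N.
Proof. by apply/card_gt0P; exists (wa (o0, true)). Qed.

Section Steps.
Variables (x : Psi n -> R) (M : R).
Hypotheses (hx : Delta x) (hM : Gfun x <= M) (M1 : 1 <= M).
Local Notation h := (hf M).

Lemma h_pos (c : R) : 0 < c -> 0 < h c.
Proof. move=> c0; rewrite /hf; apply: divr_gt0 => //; apply: addr_gt0 => //; exact: lt_le_trans ltr01 M1. Qed.
Lemma h_le (c : R) : 0 < c -> h c <= c.
Proof.
have M1' := M1.
move=> c0; rewrite /hf ler_pdivrMr; last lra.
have : 0 <= c * (M + c - 1) by apply: mulr_ge0; lra.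
lra.
Qed.
Lemma h_mono (c d : R) : 0 < c -> c <= d -> h c <= h d.
Proof.
have M1' := M1.
move=> c0 cd; rewrite /hf ler_pdivrMr; last lra.
rewrite mulrC mulrA ler_pdivlMr; last lra.
have : 0 <= M * (d - c) by apply: mulr_ge0; lra.
lra.
Qed.

Arguments h_pos [c].
Arguments h_le [c].
Arguments h_mono [c d].

Lemma L_edge (r : relation n) (w : Psi n) (c : R) : inG r -> (exists w0, w0 \in r.2) -> w \notin r.2 -> 0 < c ->
  c <= x w -> h c <= x r.1.
Proof. have M1' := M1.
move=> hG ex wn c0 cw; apply: (@edge x M c r hx hG hM _ _ w) => //; lra. Qed.

Ltac ex4 i j t s := apply/existsP; exists i; apply/existsP; exists j;
  apply/existsP; exists t; apply/existsP; exists s.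

Lemma R1a (a : letter n) (v u : Psi n) (c : R) : val v = (a, a, None) -> (val u).1.1 = a -> 0 < c -> c <= x u ->
  h c <= x v.
Proof.
case: a => i t hv hu c0 cu.
apply: (@L_edge (v, compl (S1 (i, t))) u c _ _ _ c0 cu).
- apply: inG1a.
    by apply/existsP; exists i; apply/existsP; exists t; apply/andP; split; [apply/eqP; exact: hv | exact: eqxx].
- exists (wa (linv (i, t))); rewrite inE /S1 /=; exact: linv_neq.
- by rewrite inE /S1 hu eqxx.
Qed.

Lemma R2a (a b : letter n) (v u : Psi n) (c : R) : idx a != idx b -> val v = (a, b, Some b) -> val u = (b, b, None) ->
  0 < c -> c <= x u -> h c <= x v.
Proof.
case: a => i t; case: b => j s hab hv hu c0 cu.
apply: (@L_edge (v, minus1 ((j, s), (j, s), None)) u c _ _ _ c0 cu).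
- apply: inG2a.
    by ex4 i j t s; apply/and3P; split; [exact: hab | apply/eqP; exact: hv | exact: eqxx].
- exists (wa (i, t)); rewrite inE /=; apply: contra hab => /eqP [-> _ _] //.
- by rewrite inE hu eqxx.
Qed.

Lemma R3b (a b : letter n) (v u : Psi n) (c : R) : idx a != idx b -> val v = (a, b, Some a) -> val u = (a, a, None) ->
  0 < c -> c <= x u -> h c <= x v.
Proof.
case: a => i t; case: b => j s hab hv hu c0 cu.
apply: (@L_edge (v, minus1 ((i, t), (i, t), None)) u c _ _ _ c0 cu).
- apply: inG3b.
    by ex4 i j t s; apply/and3P; split; [exact: hab | apply/eqP; exact: hv | exact: eqxx].
- exists (wa (j, s)); rewrite inE /=; apply: contra hab => /eqP [-> _ _] //.
- by rewrite inE hu eqxx.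
Qed.

Lemma R4b (a b : letter n) (v u : Psi n) (c : R) : idx a != idx b -> val v = (a, b, Some (linv a)) -> (val u).1.1 != a ->
  0 < c -> c <= x u -> h c <= x v.
Proof.
case: a => i t; case: b => j s hab hv hu c0 cu.
apply: (@L_edge (v, [set w : Psi n | S1 (i, t) (val w)]%SET) u c _ _ _ c0 cu).
- apply: inG4b.
    by ex4 i j t s; apply/and3P; split; [exact: hab | apply/eqP; exact: hv | exact: eqxx].
- by exists (wa (i, t)); rewrite inE /S1 /=.
- by rewrite inE /S1.
Qed.

Lemma R5a (a b d : letter n) (v u : Psi n) (c : R) : idx a != idx b -> idx b != idx d -> idx a != idx d ->
  val v = (a, b, Some d) -> val u = (b, d, Some d) ->
  0 < c -> c <= x u -> h c <= x v.
Proof.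
case: a => i t; case: b => j s; case: d => k p hab hbd had hv hu c0 cu.
apply: (@L_edge (v, compl (S2 (j, s) (k, p))) u c _ _ _ c0 cu).
- apply: inG5a.
    apply/existsP; exists i; apply/existsP; exists j; apply/existsP; exists k.
    apply/existsP; exists t; apply/existsP; exists s; apply/existsP; exists p.
    by apply/and5P; split; [exact: hab | exact: hbd | exact: had | apply/eqP; exact: hv | exact: eqxx].
- by exists (wa (i, t)); rewrite inE /S2 /=.
- by rewrite inE /S2 hu !eqxx.
Qed.


Lemma aux (a : letter n) (u : Psi n) (c : R) : (val u).1.1 != a -> 0 < c -> c <= x u ->
  forall v : Psi n, val v = (a, a, None) -> h (h c) <= x v.
Proof.
move=> hu c0 cu v hv.
have pf : inPsi (a, (oth a.1, true), Some (linv a)).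
  by rewrite /= oth_neq orbT.
pose v' : Psi n := @exist (word n) (fun w => inPsi w) _ pf.
have h1 : h c <= x v' := R4b a (oth a.1, true) v' u c (oth_neq a.1) erefl hu c0 cu.
have := R1a a v v' (h c) hv erefl (h_pos c0) h1.
exact.
Qed.

Lemma stepA (u : Psi n) (c : R) : 0 < c -> c <= x u ->
  forall (v : Psi n) (a : letter n), val v = (a, a, None) -> h (h (h (h c))) <= x v.
Proof.
move=> c0 cu v a hv.
have p1 := h_pos c0; have p2 := h_pos p1; have p3 := h_pos p2.
case: (eqVneq (val u).1.1 a) => [e|ne].
  have hu : (val u).1.1 != linv a by rewrite e eq_sym linv_neq.
  have h1 := aux (linv a) u c hu c0 cu (wa (linv a)) erefl.
  exact: (aux a (wa (linv a)) (h (h c)) (linv_neq a) p2 h1 v hv).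
have h1 := aux a u c ne c0 cu v hv.
exact: le_trans (h_le p3) (le_trans (h_le p2) h1).
Qed.

Lemma stepB (d : R) : 0 < d -> (forall (v : Psi n) (a : letter n), val v = (a, a, None) -> d <= x v) ->
  forall v : Psi n, h (h d) <= x v.
Proof.
move=> d0 hd.
have p1 := h_pos d0; have p2 := h_pos p1.
have B2 : forall (v : Psi n) (a b : letter n), idx a != idx b -> val v = (a, b, Some b) -> h d <= x v.
  move=> v a b hab hv; have := (R2a a b v (wa b) d hab hv erefl d0 (hd (wa b) b erefl)). exact.
move=> v; have pf := valP v.
case E: (val v) pf => [[a b] [c|]] pf; last first.
  move: pf => /eqP e; subst b.
  exact: le_trans (h_le p1) (le_trans (h_le d0) (hd _ _ E)).
move: pf => /= /andP [hab hc].
case: (eqVneq c b) => [cb|cnb].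
  subst c; exact: le_trans (h_le p1) (B2 _ _ _ hab E).
have hc' : idx c != idx b by move: hc; rewrite (negbTE cnb).
case: a hab E => i t hab E; case: c cnb hc hc' E => k p cnb hc hc' E.
case: (eqVneq k i) => [ki|kni].
  subst k; case: (eqVneq p t) => [pt|pnt].
    subst p; apply: le_trans (h_le p1) _; exact: (R3b (i, t) b v (wa (i, t)) d hab E erefl d0 (hd (wa (i,t)) (i,t) erefl)).
  have bb : forall p1 t1 : bool, p1 != t1 -> p1 = ~~ t1 by do 2 case.
  have Ep := bb _ _ pnt.
  subst p; apply: le_trans (h_le p1) _.
  exact: (R4b (i, t) b v (wa (linv (i, t))) d hab E (linv_neq _) d0 (hd (wa (linv (i,t))) (linv (i,t)) erefl)).
have pf' : inPsi (b, (k, p), Some (k, p)) by rewrite /= eq_sym hc' eqxx.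
pose u : Psi n := @exist (word n) (fun w => inPsi w) _ pf'.
have hu : h d <= x u by apply: (B2 u b (k, p)); rewrite // eq_sym.
apply: (R5a (i, t) b (k, p) v u (h d) hab _ _ E erefl p1 hu).
  by rewrite eq_sym.
by rewrite eq_sym.
Qed.


Lemma key (v : Psi n) : h (h (h (h (h (h (1 / NN)))))) <= x v.
Proof.
have N0 : 0 < NN by rewrite ltr0n card_pos.
have c0 : 0 < 1 / NN by rewrite divr_gt0.
have [u hu] : exists u, 1 / NN <= x u.
  apply: contrapT => H.
  have lt : forall u, x u < 1 / NN.
    by move=> u; rewrite ltNge; apply/negP => h'; apply: H; exists u.
  have hh : has predT (index_enum (Psi n)).
    by apply/hasP; exists (wa (o0, true)); rewrite ?mem_index_enum.
  have := ltr_sum (P := predT) (F := x) (G := fun _ => 1 / NN) hh (fun u _ => lt u).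
  have e1 : \sum_(i <- index_enum (Psi n) | predT i) x i = 1 := hx.2.
  have e2 : \sum_(i <- index_enum (Psi n) | predT i) (1 / NN) = 1.
    have -> : \sum_(i <- index_enum (Psi n) | predT i) (1 / NN) = \sum_(i : Psi n) (1 / NN) by [].
    rewrite sumr_const -mulr_natr mul1r mulVf //; exact: lt0r_neq0.
  by rewrite e1 e2 ltxx.
have p1 := h_pos c0; have p2 := h_pos p1; have p3 := h_pos p2; have p4 := h_pos p3.
apply: (stepB _ p4) => w a hw.
exact: (stepA u (1 / NN) c0 hu w a hw).
Qed.

End Steps.
End Comb.

From mathcomp Require Import topology normedtype derive.
Import Order.TTheory GRing.Theory Num.Theory.
Import numFieldNormedType.Exports.
Definition RT (R : realType) : topologicalType := R.
Notation PT n R := (prod_topology (fun _ : Psi n => RT R)).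

Section Topo.
Variables (n : nat) (R : realType).
Local Notation PT := (PT n R).

#[local] Instance nfPT (x0 : PT) : Filter (nbhs x0) | 0 := @nbhs_filter PT x0.

Lemma cont_proj (w : Psi n) : continuous (fun x : PT => x w).
Proof. exact: (@proj_continuous (Psi n) (fun _ => R) w). Qed.

Lemma cont_sum (I : Type) (s : seq I) (P : pred I) (F : I -> PT -> R) (x0 : PT) :
  (forall i, P i -> {for x0, continuous (F i)}) ->
  {for x0, continuous (fun x : PT => \sum_(i <- s | P i) F i x)}.
Proof.
move=> hF; elim: s => [|i s IH].
  have -> : (fun x : PT => \sum_(i <- [::] | P i) F i x) = (fun _ => 0).
    by apply: funext => x; rewrite big_nil.
  exact: cvg_cst.
have -> : (fun x : PT => \sum_(j <- i :: s | P j) F j x) =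
  (fun x : PT => if P i then F i x + \sum_(j <- s | P j) F j x else \sum_(j <- s | P j) F j x).
  by apply: funext => x; rewrite big_cons.
case Pi: (P i); last exact: IH.
apply: cvgD; [exact: hF | exact: IH].
Qed.

Lemma cont_max (I : Type) (s : seq I) (P : pred I) (F : I -> PT -> R) (x0 : PT) :
  (forall i, P i -> {for x0, continuous (F i)}) ->
  {for x0, continuous (fun x : PT => \big[Num.max/0]_(i <- s | P i) F i x)}.
Proof.
move=> hF; elim: s => [|i s IH].
  have -> : (fun x : PT => \big[Num.max/0]_(i <- [::] | P i) F i x) = (fun _ => 0).
    by apply: funext => x; rewrite big_nil.
  exact: cvg_cst.
have -> : (fun x : PT => \big[Num.max/0]_(j <- i :: s | P j) F j x) =
  (fun x : PT => if P i then Num.max (F i x) (\big[Num.max/0]_(j <- s | P j) F j x) else \big[Num.max/0]_(j <- s | P j) F j x).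
  by apply: funext => x; rewrite big_cons.
case Pi: (P i); last exact: IH.
exact: (continuous_max (hF i Pi) IH).
Qed.


Lemma cont_fr (r : relation n) (x0 : PT) : (forall w, 0 < x0 w) ->
  {for x0, continuous (fun x : PT => fr r x)}.
Proof.
move=> x0pos.
case: (set_0Vmem r.2) => [e | [w0 w0in]].
  have -> : (fun x : PT => fr r x) = (fun _ => 0).
    by apply: funext => x; rewrite /fr /Xr e big_set0 invr0 !mulr0.
  exact: cvg_cst.
have X0 : 0 < Xr r x0.
  rewrite /Xr (bigD1 w0) //=; apply: ltr_pwDl; first exact: x0pos.
  by apply: sumr_ge0 => i _; apply: ltW.
have cX : {for x0, continuous (fun x : PT => Xr r x)}.
  by apply: cont_sum => i _; apply: cont_proj.
rewrite /fr /xr.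
apply: cvgM; apply: cvgM.
- apply: cvgB; [exact: cvg_cst | exact: cont_proj].
- apply: cvgV; [exact: lt0r_neq0 | exact: cont_proj].
- apply: cvgB; [exact: cvg_cst | exact: cX].
- apply: cvgV; [exact: lt0r_neq0 | exact: cX].
Qed.

Lemma cont_G (x0 : PT) : (forall w, 0 < x0 w) -> {for x0, continuous (fun x : PT => Gfun x)}.
Proof. by move=> h; rewrite /Gfun; apply: cont_max => r _; exact: cont_fr. Qed.

End Topo.

#[local] Instance nfPT' (n : nat) (R : realType) (x0 : PT n R) : Filter (nbhs x0) | 0 := @nbhs_filter (PT n R) x0.

Lemma itv_lo (R : realType) (a b x : R) : `[a, b] x -> a <= x.
Proof. by rewrite /= in_itv /= => /andP []. Qed.
Lemma itv_in (R : realType) (a b x : R) : a <= x -> x <= b -> `[a, b] x.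
Proof. by move=> h1 h2; rewrite /= in_itv /= h1 h2. Qed.

Lemma Delta_le1 (n : nat) (R : realType) (y : Psi n -> R) : Delta y -> forall w, y w <= 1.
Proof.
move=> [ypos ysum] w; rewrite -ysum (bigD1 w) //= lerDl.
by apply: sumr_ge0 => i _; apply: ltW.
Qed.

Theorem lemma5p1 (R : realType) (n : nat) (hn : (2 <= n)%N) :
  exists2 xs : Psi n -> R, @Delta n R xs &
    Gfun xs = inf [set Gfun y | y in @Delta n R].
Proof.
have N0 : 0 < NN n R by rewrite ltr0n card_pos.
set c0 := 1 / NN n R.
have c0pos : 0 < c0 by rewrite divr_gt0.
pose x0 : Psi n -> R := fun _ => c0.
have Dx0 : Delta x0.
  split => //; rewrite sumr_const -mulr_natr /c0 mul1r mulVf //; exact: lt0r_neq0.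
set M := Num.max (Gfun x0) 1.
have M1 : 1 <= M by rewrite le_max lexx orbT.
have GM : Gfun x0 <= M by rewrite le_max lexx.
pose h := hf R M.
set dl := h (h (h (h (h (h c0))))).
have hp := h_pos R M M1; have hl := h_le R M M1.
have dpos : 0 < dl := hp _ (hp _ (hp _ (hp _ (hp _ (hp _ c0pos))))).
have dle : dl <= c0.
  rewrite /dl /h.
  apply: le_trans (hl _ (hp _ (hp _ (hp _ (hp _ (hp _ c0pos)))))) _.
  apply: le_trans (hl _ (hp _ (hp _ (hp _ (hp _ c0pos))))) _.
  apply: le_trans (hl _ (hp _ (hp _ (hp _ c0pos)))) _.
  apply: le_trans (hl _ (hp _ (hp _ c0pos))) _.
  apply: le_trans (hl _ (hp _ c0pos)) _.
  exact: (hl _ c0pos).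
have c0le1 : c0 <= 1 := Delta_le1 n R x0 Dx0 (wa n (o0 n hn, true)).
have keyD : forall y : Psi n -> R, Delta y -> Gfun y <= M -> forall w, dl <= y w.
  move=> y hy hG w; have := (key n R hn y M hy hG M1 w). exact.
pose K1 : set (PT n R) := [set y : PT n R | forall w, `[dl, 1] (y w)] `&`
   [set y : PT n R | \sum_(w : Psi n) y w = 1].
have cK : compact K1.
  apply: compact_closedI.
    have := @tychonoff (Psi n) (fun _ => RT R) (fun _ => `[dl, 1]) (fun _ => @segment_compact R dl 1).
    exact.
  apply: (@preimage_closed _ _ (fun y : PT n R => \sum_(w : Psi n) y w) [set x : RT R | x = 1]).
    by move=> y _; apply: cont_sum => i _; apply: cont_proj.
  exact: closed_eq.
have K1x0 : K1 x0.
  split; last exact: Dx0.2.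
  move=> w /=; change (c0 \in `[dl, 1]%R); by rewrite in_itv /= dle c0le1.
have cG : {within K1, continuous (fun y : PT n R => Gfun y)}.
  apply: continuous_in_subspaceT => y /set_mem [hy _]; apply: cont_G => w.
  exact: (lt_le_trans dpos (@itv_lo R _ _ _ (hy w))).
have K1ne : K1 !=set0 by exists x0.
have [c cK1 cmin] := compact_EVT_min K1ne cK cG.
move/set_mem: (cK1) => [cK1a cK1b].
have Dc : Delta c.
  split => // w; exact: (lt_le_trans dpos (@itv_lo R _ _ _ (cK1a w))).
have lowc : forall y : Psi n -> R, Delta y -> Gfun c <= Gfun y.
  move=> y hy; case: (leP (Gfun y) M) => [hle | hgt].
    apply: cmin; apply/mem_set; split; last exact: hy.2.
    move=> w; apply: (@itv_in R); first exact: keyD.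
    exact: Delta_le1.
  apply: le_trans (ltW hgt); apply: le_trans GM.
  by apply: cmin; apply/mem_set.
exists c => //.
apply/eqP; rewrite eq_le; apply/andP; split.
  apply: lb_le_inf; first by exists (Gfun c), c.
  by move=> _ [y hy <-]; exact: lowc.
apply: ge_inf; last by exists c.
by exists (Gfun c) => _ [y hy <-]; exact: lowc.
Qed.
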